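(* For every $p\in(1/2,1)$ and every $V\in\{G,B\}$ there exists $\underline{\epsilon}>0$ (depending on $V$ and $p$) such that $\mathbb{P}_{Y\text{-cas}}(\epsilon)<\mathbb{P}_{Y\text{-cas}}(0)$ for all $\epsilon\in(0,\underline{\epsilon})$.
   Context: Observational learning model: an item has true value $V\in\{G,B\}$; agents arrive sequentially, each receives a private binary signal equal to the ''correct'' signal with probability $p\in(1/2,1)$, and each agent is independently fake with probability $\epsilon\in[0,1)$ (a fake agent's recorded action is always $Y$ = buy). Define $a=p+(1-p)\epsilon$, $b=p(1-\epsilon)$, $\alpha=p/(1-p)$ and $\eta=\eta(\epsilon)=\log\big(a/(1-b)\big)/\log\alpha\in(0,1]$. Given $V$, let $p_f=a$ if $V=G$ and $p_f=1-b$ if $V=B$. Before any cascade, the agents' sufficient statistic $h$ evolves as the following random walk: $h_0=0$ and, independently at each step, $h$ increases by $\eta$ with probability $p_f$ (an observed $Y$) or decreases by $1$ with probability $1-p_f$ (an observed $N$); the walk is stopped the first time it leaves $[-1,1]$. Leaving above $1$ is a $Y$ cascade, leaving below $-1$ is an $N$ cascade. $\mathbb{P}_{Y\text{-cas}}(\epsilon)$ denotes the probability (given $V$) that the walk leaves $[-1,1]$ above $1$. (For $\epsilon=0$ one has $\eta=1$, so $\mathbb{P}_{Y\text{-cas}}(0)$ is the probability that the $\pm1$ walk from $0$ reaches $2$ before $-2$.) *)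

(* Defs.v *)
From Stdlib Require Import Reals Lra.
From Coquelicot Require Import Coquelicot.
Open Scope R_scope.

Inductive value := G | B.

Definition a_par (p eps : R) : R := p + (1 - p) * eps.
Definition b_par (p eps : R) : R := p * (1 - eps).
Definition alpha (p : R) : R := p / (1 - p).
Definition eta (p eps : R) : R :=
  ln (a_par p eps / (1 - b_par p eps)) / ln (alpha p).

(* probability of an observed Y given V *)
Definition p_f (p eps : R) (V : value) : R :=
  match V with G => a_par p eps | B => 1 - b_par p eps end.

Definition exit_or (k : R -> R) (x : R) : R :=
  if Rlt_dec 1 x then 1 else if Rlt_dec x (-1) then 0 else k x.

(* ycas_n p eps V n h = probability that the walk started at h (inside
   [-1,1]) leaves [-1,1] above 1 within at most n steps. *)
Fixpoint ycas_n (p eps : R) (V : value) (n : nat) (h : R) : R :=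
  match n with
  | O => 0
  | S m =>
      p_f p eps V * exit_or (ycas_n p eps V m) (h + eta p eps)
      + (1 - p_f p eps V) * exit_or (ycas_n p eps V m) (h - 1)
  end.

(* P_{Y-cas}(eps): probability (given V) that the walk from 0 ever leaves
   [-1,1] above 1; the limit of the nondecreasing bounded sequence above. *)
Definition P_Ycas (p eps : R) (V : value) : R :=
  real (Lim_seq (fun n => ycas_n p eps V n 0)).

(* Main.v *)
Require Import Defs.
From Stdlib Require Import Reals Lra Psatz Lia.
From Coquelicot Require Import Coquelicot.
Open Scope R_scope.

Definition Dq (q : R) := 1 - q*(1-q)*(1+q-q^2).
Definition yv q := q / Dq q.
Definition xv q := q^2 / Dq q.
Definition Cv q := q^3 / Dq q.
Definition Av q := q^2*(1+q-q^2) / Dq q.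

Lemma Dq_pos q : 0 <= q <= 1 -> 0 < Dq q.
Proof. intros. unfold Dq. pose proof (pow2_ge_0 (q-1/2)). assert (0 <= q*(1-q) <= 1/4) by nra. assert (1 <= 1+q-q^2 <= 5/4) by nra. nra. Qed.

Lemma vals q : 0 <= q <= 1 ->
  yv q = q + (1-q)*Av q /\ xv q = q * yv q /\ Cv q = q * xv q /\
  Av q = q * yv q + (1-q) * Cv q /\
  0 <= Cv q /\ Cv q <= xv q /\ xv q <= Av q /\ Av q <= yv q /\ yv q <= 1.
Proof.
  intros Hq. pose proof (Dq_pos q Hq) as HD.
  unfold yv, xv, Cv, Av.
  assert (Dq q <> 0) by lra.
  repeat split; try (unfold Dq in *; field; lra).
  - apply Rmult_le_pos; [simpl; nra | left; apply Rinv_0_lt_compat; lra].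
  - unfold Rdiv; apply Rmult_le_compat_r; [left; apply Rinv_0_lt_compat; lra| simpl; nra].
  - unfold Rdiv; apply Rmult_le_compat_r; [left; apply Rinv_0_lt_compat; lra| ].
    assert (0 <= q*(1-q)) by nra. assert (0 <= q*q) by nra. assert (0 <= (q*q)*(q*(1-q))) by (apply Rmult_le_pos; auto). simpl. nra.
  - unfold Rdiv; apply Rmult_le_compat_r; [left; apply Rinv_0_lt_compat; lra| ].
    assert (0 <= q*(1-q)) by nra. assert (0 <= (1-q)*(1+q)) by nra. assert (0 <= (q*(1-q))*((1-q)*(1+q))) by (apply Rmult_le_pos; auto). simpl. nra.
  - apply Rmult_le_reg_r with (Dq q); auto. unfold Rdiv. rewrite Rmult_assoc, Rinv_l by lra.
    unfold Dq. assert (0 <= (1-q)*(1-q)) by nra. assert (0 <= ((1-q)*(1-q))*((1-q)*(1+q))) by (apply Rmult_le_pos; nra). simpl. nra.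
Qed.

Definition U q h :=
  if Rlt_dec 0 h then yv q else if Rlt_dec h 0 then
   (if Rlt_dec (-1) h then xv q else Cv q) else Av q.

Lemma exit_le k1 k2 z : (forall w, -1 <= w <= 1 -> k1 w <= k2 w) ->
  exit_or k1 z <= exit_or k2 z.
Proof. intros H. unfold exit_or. destruct Rlt_dec; [lra|]. destruct Rlt_dec; [lra|]. apply H; lra. Qed.

Lemma pf_range p eps V : 1/2 < p < 1 -> 0 <= eps < 1 -> 0 < p_f p eps V < 1.
Proof. intros. destruct V; simpl; unfold a_par, b_par; nra. Qed.

Lemma ycas_upper p eps V : 1/2 < p < 1 -> 0 <= eps < 1 -> 0 < eta p eps < 1 ->
  forall n h, -1 <= h <= 1 -> ycas_n p eps V n h <= U (p_f p eps V) h.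
Proof.
  intros Hp He Het.
  pose proof (pf_range p eps V Hp He) as Hq.
  set (q := p_f p eps V) in *.
  destruct (vals q ltac:(lra)) as (H1&H2&H3&H4&H5&H6&H7&H8&H9).
  induction n; intros h Hh.
  - cbn [ycas_n]. unfold U. repeat destruct Rlt_dec; lra.
  - cbn [ycas_n]. fold q.
    apply Rle_trans with (q * exit_or (U q) (h + eta p eps) + (1-q) * exit_or (U q) (h - 1)).
    { apply Rplus_le_compat; apply Rmult_le_compat_l; try lra; apply exit_le; auto. }
    set (e := eta p eps) in *.
    set (y := yv q) in *. set (x := xv q) in *. set (C := Cv q) in *. set (A := Av q) in *.
    unfold exit_or, U; fold y x C A; repeat destruct Rlt_dec; try lra; nra.
Qed.

Lemma eta_bounds p eps : 1/2 < p < 1 -> 0 < eps < 1 -> 0 < eta p eps < 1.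
Proof.
  intros Hp He. unfold eta, alpha, a_par, b_par.
  assert (Hal : 1 < p/(1-p)) by (apply Rlt_div_r; lra).
  assert (Hl : 0 < ln (p/(1-p))) by (rewrite <- ln_1; apply ln_increasing; lra).
  assert (H1 : 1 < (p + (1-p)*eps) / (1 - p*(1-eps))) by (apply Rlt_div_r; nra).
  assert (H2 : (p + (1-p)*eps) / (1 - p*(1-eps)) < p/(1-p)).
  { assert (E : p/(1-p) - (p + (1-p)*eps) / (1 - p*(1-eps)) =
      (p*(1 - p*(1-eps)) - (p + (1-p)*eps)*(1-p)) / ((1-p)*(1 - p*(1-eps)))) by (field; nra).
    assert (0 < (p*(1 - p*(1-eps)) - (p + (1-p)*eps)*(1-p)) / ((1-p)*(1 - p*(1-eps)))).
    { apply Rdiv_lt_0_compat; [replace (p*(1 - p*(1-eps)) - (p + (1-p)*eps)*(1-p)) with (eps*(2*p-1)) by ring; nra | apply Rmult_lt_0_compat; nra]. }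
    lra. }
  assert (0 < ln ((p + (1-p)*eps) / (1 - p*(1-eps)))) by (rewrite <- ln_1; apply ln_increasing; lra).
  assert (ln ((p + (1-p)*eps) / (1 - p*(1-eps))) < ln (p/(1-p))) by (apply ln_increasing; lra).
  split. apply Rdiv_lt_0_compat; lra. apply Rlt_div_l; lra.
Qed.

Lemma eta0 p : 1/2 < p < 1 -> eta p 0 = 1.
Proof.
  intros Hp. unfold eta, alpha, a_par, b_par.
  assert (Hal : 1 < p/(1-p)) by (apply Rlt_div_r; lra).
  assert (Hl : 0 < ln (p/(1-p))) by (rewrite <- ln_1; apply ln_increasing; lra).
  replace (p + (1-p)*0) with p by ring. replace (1 - p*(1-0)) with (1-p) by ring.
  field. lra.
Qed.

Lemma ycas_range p eps V : 0 <= p_f p eps V <= 1 ->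
  forall n h, 0 <= ycas_n p eps V n h <= 1.
Proof.
  intros Hq. induction n; intros h; cbn [ycas_n]; [lra|].
  assert (forall z, 0 <= exit_or (ycas_n p eps V n) z <= 1).
  { intros z. unfold exit_or. repeat destruct Rlt_dec; auto; lra. }
  pose proof (H (h + eta p eps)). pose proof (H (h-1)). nra.
Qed.

Lemma ycas_mono p eps V : 0 <= p_f p eps V <= 1 ->
  forall n h, ycas_n p eps V n h <= ycas_n p eps V (S n) h.
Proof.
  intros Hq. induction n; intros h.
  - change (ycas_n p eps V 0 h) with 0. apply (ycas_range p eps V Hq 1).
  - change (ycas_n p eps V (S n) h) with
      (p_f p eps V * exit_or (ycas_n p eps V n) (h + eta p eps)
      + (1 - p_f p eps V) * exit_or (ycas_n p eps V n) (h - 1)).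
    change (ycas_n p eps V (S (S n)) h) with
      (p_f p eps V * exit_or (ycas_n p eps V (S n)) (h + eta p eps)
      + (1 - p_f p eps V) * exit_or (ycas_n p eps V (S n)) (h - 1)).
    apply Rplus_le_compat; apply Rmult_le_compat_l; try lra; apply exit_le; auto.
Qed.

Lemma ycas_mono' p eps V : 0 <= p_f p eps V <= 1 ->
  forall n m h, (n <= m)%nat -> ycas_n p eps V n h <= ycas_n p eps V m h.
Proof.
  intros Hq n m h Hnm. induction Hnm; [lra|].
  eapply Rle_trans; [apply IHHnm| apply ycas_mono; auto].
Qed.

Lemma two_step p V n : 1/2 < p < 1 ->
  ycas_n p 0 V (S (S n)) 0 =
   (p_f p 0 V)^2 + 2 * p_f p 0 V * (1 - p_f p 0 V) * ycas_n p 0 V n 0.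
Proof.
  intros Hp. cbn [ycas_n]. rewrite (eta0 p Hp).
  set (q := p_f p 0 V).
  unfold exit_or.
  replace (0+1) with 1 by ring. replace (0-1) with (-1) by ring.
  replace (1+1) with 2 by ring. replace (1-1) with 0 by ring.
  replace (-1+1) with 0 by ring. replace (-1-1) with (-2) by ring.
  repeat (destruct Rlt_dec; try lra).
  all: try ring.
Qed.

Lemma even_val p V k : 1/2 < p < 1 ->
  let q := p_f p 0 V in let r := 2*q*(1-q) in
  ycas_n p 0 V (2*k) 0 = q^2/(1-r) * (1 - r^k).
Proof.
  intros Hp q r.
  pose proof (pf_range p 0 V Hp ltac:(lra)) as Hq. fold q in Hq.
  assert (Hr : r <= 1/2) by (unfold r; pose proof (pow2_ge_0 (q-1/2)); nra).
  induction k.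
  - simpl. field. lra.
  - replace (2 * S k)%nat with (S (S (2*k))) by lia.
    rewrite two_step by auto. fold q. rewrite IHk. simpl. unfold r in *. field. lra.
Qed.

Lemma Av_cont q0 : 0 < q0 < 1 -> forall e, 0 < e -> exists d, 0 < d /\
  forall q, Rabs (q - q0) < d -> Rabs (Av q - Av q0) < e.
Proof.
  intros Hq e He.
  assert (Hc : continuous Av q0).
  { apply (@ex_derive_continuous R_AbsRing R_NormedModule). unfold Av, Dq. auto_derive.
    pose proof (Dq_pos q0 ltac:(lra)). unfold Dq in H. simpl in *. lra. }
  unfold continuous in Hc. rewrite filterlim_locally in Hc.
  destruct (Hc (mkposreal e He)) as [d Hd].
  exists d. split; [apply cond_pos|].
  intros q Hqd. apply (Hd q). exact Hqd.
Qed.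

Lemma A_lt_P0 q : 0 < q < 1 -> Av q < q^2 / (1 - 2*q*(1-q)).
Proof.
  intros Hq. pose proof (Dq_pos q ltac:(lra)) as HD.
  assert (Hr : 0 < 1 - 2*q*(1-q)) by (pose proof (pow2_ge_0 (q-1/2)); nra).
  unfold Av.
  assert (E : q^2 / (1 - 2*q*(1-q)) - q^2*(1+q-q^2) / Dq q =
     (q^2 * (q*(1-q))^2) / ((1 - 2*q*(1-q)) * Dq q)).
  { unfold Dq in *. field. lra. }
  assert (0 < (q^2 * (q*(1-q))^2) / ((1 - 2*q*(1-q)) * Dq q)).
  { apply Rdiv_lt_0_compat; [|nra]. apply Rmult_lt_0_compat; [nra|].
    apply pow_lt. nra. }
  lra.
Qed.

Lemma lim_le_of (u : nat -> R) (c : R) : (forall n, 0 <= u n <= c) -> real (Lim_seq u) <= c.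
Proof.
  intros H.
  assert (H1 : Rbar_le (Lim_seq u) (Lim_seq (fun _ => c))) by
    (apply Lim_seq_le_loc; exists O; intros; apply H).
  assert (H2 : Rbar_le (Lim_seq (fun _ => 0)) (Lim_seq u)) by
    (apply Lim_seq_le_loc; exists O; intros; apply H).
  rewrite Lim_seq_const in H1, H2.
  destruct (Lim_seq u); simpl in *; try tauto. all: pose proof (H O); lra.
Qed.

Lemma lim_ge_of (u : nat -> R) (c : R) (N : nat) : (forall n, u n <= 1) ->
  (forall n, (N <= n)%nat -> c <= u n) -> c <= real (Lim_seq u).
Proof.
  intros H1 H.
  assert (H3 : Rbar_le (Lim_seq u) (Lim_seq (fun _ => 1))) by
    (apply Lim_seq_le_loc; exists O; intros; apply H1).
  assert (H2 : Rbar_le (Lim_seq (fun _ => c)) (Lim_seq u)) by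
    (apply Lim_seq_le_loc; exists N; intros; apply H; auto).
  rewrite Lim_seq_const in H3, H2.
  destruct (Lim_seq u); simpl in *; tauto.
Qed.

Theorem theorem2 :
  forall (p : R) (V : value), 1/2 < p < 1 ->
  exists eps_low : R, 0 < eps_low /\
    forall eps : R, 0 < eps < eps_low -> eps < 1 ->
      P_Ycas p eps V < P_Ycas p 0 V.
Proof.
  intros p V Hp.
  pose proof (pf_range p 0 V Hp ltac:(lra)) as Hq0.
  set (q0 := p_f p 0 V) in *.
  set (r := 2*q0*(1-q0)).
  assert (Hr : 0 < r <= 1/2) by (unfold r; pose proof (pow2_ge_0 (q0-1/2)); assert (0 < q0*(1-q0)) by (apply Rmult_lt_0_compat; lra); nra).
  set (P0 := q0^2/(1-r)).
  assert (HP0 : 0 < P0) by (unfold P0; apply Rdiv_lt_0_compat; [nra|lra]).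
  pose proof (A_lt_P0 q0 Hq0) as HA. fold r P0 in HA.
  set (D := P0 - Av q0).
  destruct (Av_cont q0 Hq0 (D/2) ltac:(unfold D; lra)) as [d [Hd Hcont]].
  destruct (pow_lt_1_zero r ltac:(rewrite Rabs_right; lra) (D/(2*P0))
     ltac:(apply Rdiv_lt_0_compat; unfold D; lra)) as [k Hk].
  assert (Hlow : P0 - D/2 <= P_Ycas p 0 V).
  { unfold P_Ycas. apply lim_ge_of with (N := (2*k)%nat).
    - intros n. apply ycas_range. fold q0; lra.
    - intros n Hn. eapply Rle_trans; [| apply (ycas_mono' p 0 V ltac:(fold q0; lra) (2*k) n 0 Hn)].
      rewrite (even_val p V k Hp). fold q0. fold r. fold P0.
      specialize (Hk k (le_n k)). rewrite Rabs_right in Hk by (left; apply pow_lt; lra).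
      assert (P0 * r^k < P0 * (D/(2*P0))) by (apply Rmult_lt_compat_l; lra).
      replace (P0 * (D/(2*P0))) with (D/2) in H by (field; lra).
      nra. }
  exists d. split; [exact Hd|].
  intros eps He He1.
  assert (Hqe : Rabs (p_f p eps V - q0) < d).
  { unfold q0. destruct V; simpl; unfold a_par, b_par;
    rewrite Rabs_right by nra; nra. }
  specialize (Hcont _ Hqe).
  assert (Hup : P_Ycas p eps V <= Av (p_f p eps V)).
  { unfold P_Ycas. apply lim_le_of. intros n. split.
    - apply ycas_range. pose proof (pf_range p eps V Hp ltac:(lra)). lra.
    - eapply Rle_trans. apply ycas_upper; auto; try lra. apply eta_bounds; auto. lra.
      unfold U. repeat destruct Rlt_dec; lra. }
  apply Rabs_def2 in Hcont. unfold D in *. lra.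
Qed.
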